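(* Let $(W,S)$ be a Coxeter system of finite rank and $S'$ another set of Coxeter generators of $W$ such that $S'\subseteq S^W$ and $S$ is sharp-angled with respect to $S'$. Let $B\subseteq S$ and $B'\subseteq S'$ satisfy $\langle B\rangle=\langle B'\rangle$. Then $B'\subseteq B^{\langle B\rangle}$ and $B$ is sharp-angled with respect to $B'$ (as sets of Coxeter generators of $\langle B\rangle$).
   Context: Coxeter system $(W,S)$: $W=\langle S\mid (st)^{m(s,t)}\ (m(s,t)<\infty)\rangle$, $m(s,s)=1$, $m(s,t)=m(t,s)\in\{2,\dots,\infty\}$; $S$ is a set of Coxeter generators. For a group $G$ and subset $X$, $X^G=\{gxg^{-1}: g\in G, x\in X\}$. If $S'\subseteq S^W$ is another set of Coxeter generators of $W$, $S$ is sharp-angled with respect to $S'$ if for all $s,t\in S$ with $2<m(s,t)<\infty$ there exists $w\in W$ with $w\{s,t\}w^{-1}\subseteq S'$ (for $B,B'$ generating $\langle B\rangle$, the same definition is used with $W$ replaced by $\langle B\rangle$). *)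

(* Defs.v *)
From Stdlib Require Import List.

Record Grp : Type := {
  carrier :> Type;
  gmul : carrier -> carrier -> carrier;
  ginv : carrier -> carrier;
  gone : carrier;
  gmulA : forall x y z, gmul x (gmul y z) = gmul (gmul x y) z;
  gmul1 : forall x, gmul gone x = x;
  gmulV : forall x, gmul (ginv x) x = gone
}.

Arguments gmul {g}. Arguments ginv {g}. Arguments gone {g}.

Fixpoint gpow {G : Grp} (x : G) (n : nat) : G :=
  match n with O => gone | S k => gmul x (gpow x k) end.

Inductive gen {G : Grp} (A : G -> Prop) : G -> Prop :=
| gen_one : gen A gone
| gen_in : forall x, A x -> gen A x
| gen_mul : forall x y, gen A x -> gen A y -> gen A (gmul x y)
| gen_inv : forall x, gen A x -> gen A (ginv x).

Definition order_eq {G : Grp} (x : G) (n : nat) : Prop :=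
  0 < n /\ gpow x n = gone /\ forall k, 0 < k < n -> gpow x k <> gone.

(* S is a set of Coxeter generators of the subgroup H of W
   (H given as a predicate; H = everything for W itself):
   S generates H, consists of involutions, and H has the presentation
   < S | (st)^{m(s,t)} (m(s,t) < oo) > with m(s,t) the order of st,
   expressed by the universal property of the presentation. *)
Definition coxeter_gens (W : Grp) (H S : W -> Prop) : Prop :=
  (forall x, H x <-> gen S x) /\
  (forall s, S s -> s <> gone /\ gmul s s = gone) /\
  (forall (G : Grp) (f : W -> G),
     (forall s t n, S s -> S t -> gpow (gmul s t) n = gone ->
                    gpow (gmul (f s) (f t)) n = gone) ->
     exists phi : W -> G,
       (forall x y, H x -> H y -> phi (gmul x y) = gmul (phi x) (phi y)) /\
       (forall s, S s -> phi s = f s)).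

Definition finite_set {W : Grp} (S : W -> Prop) : Prop :=
  exists l : list W, forall s, S s <-> In s l.

(* X^H = { h x h^-1 : h in H, x in X } *)
Definition conj_closure {W : Grp} (H X : W -> Prop) (y : W) : Prop :=
  exists h x, H h /\ X x /\ y = gmul (gmul h x) (ginv h).

Definition sharp_angled {W : Grp} (H S S' : W -> Prop) : Prop :=
  forall s t m, S s -> S t -> order_eq (gmul s t) m -> 2 < m ->
    exists w, H w /\ S' (gmul (gmul w s) (ginv w)) /\ S' (gmul (gmul w t) (ginv w)).

(* Main.v *)
Require Import Defs.
From Stdlib Require Import List Arith Lia Bool ClassicalEpsilon ProofIrrelevance FunctionalExtensionality Classical.
Import ListNotations.

Arguments gmulA {g}. Arguments gmul1 {g}. Arguments gmulV {g}.
Local Infix "**" := gmul (at level 40, left associativity).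

Section Grp_basics.
Lemma mulV_r {G:Grp} (x:G) : x ** ginv x = gone.
Proof.
  rewrite <- (gmul1 (x ** ginv x)).
  rewrite <- (gmulV (ginv x)) at 1.
  rewrite <- gmulA. rewrite (gmulA (ginv x) x (ginv x)).
  rewrite gmulV, gmul1. apply gmulV.
Qed.
Lemma mul1_r {G:Grp} (x:G) : x ** gone = x.
Proof. rewrite <- (gmulV x), gmulA, mulV_r, gmul1. reflexivity. Qed.
Lemma cancel_l {G:Grp} (a b c:G) : a ** b = a ** c -> b = c.
Proof. intro H. rewrite <- (gmul1 b), <- (gmul1 c), <- (gmulV a), <- !gmulA, H. reflexivity. Qed.
Lemma cancel_r {G:Grp} (a b c:G) : b ** a = c ** a -> b = c.
Proof. intro H. rewrite <- (mul1_r b), <- (mul1_r c), <- (mulV_r a), !gmulA, H. reflexivity. Qed.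
Lemma inv_unique {G:Grp} (a b:G) : a ** b = gone -> b = ginv a.
Proof. intro H. apply (cancel_l a). rewrite H, mulV_r. reflexivity. Qed.
Lemma inv_unique_l {G:Grp} (a b:G) : a ** b = gone -> a = ginv b.
Proof. intro H. apply (cancel_r b). rewrite H, gmulV. reflexivity. Qed.
Lemma inv_inv {G:Grp} (a:G) : ginv (ginv a) = a.
Proof. symmetry. apply inv_unique. apply gmulV. Qed.
Lemma inv_mul {G:Grp} (a b:G) : ginv (a ** b) = ginv b ** ginv a.
Proof. symmetry. apply inv_unique. rewrite <- gmulA, (gmulA b), mulV_r, gmul1, mulV_r. reflexivity. Qed.
Lemma inv_one {G:Grp} : ginv (@gone G) = gone.
Proof. symmetry. apply inv_unique. apply gmul1. Qed.
Lemma idem_one {G:Grp} (a:G) : a ** a = a -> a = gone.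
Proof. intro H. apply (cancel_l a). rewrite H, mul1_r. reflexivity. Qed.
Lemma invol_inv {G:Grp} (a:G) : a ** a = gone -> ginv a = a.
Proof. intro H. symmetry. apply inv_unique. exact H. Qed.
Lemma gpow_add {G:Grp} (x:G) a b : gpow x (a + b) = gpow x a ** gpow x b.
Proof. induction a; simpl. now rewrite gmul1. now rewrite IHa, gmulA. Qed.
Lemma gpow_succ_r {G:Grp} (x:G) a : gpow x (S a) = gpow x a ** x.
Proof. replace (S a) with (a + 1) by lia. rewrite gpow_add. simpl. now rewrite mul1_r. Qed.
End Grp_basics.

Definition prod {G:Grp} (a : list G) : G := fold_right gmul gone a.
Lemma prod_app {G:Grp} (a b : list G) : prod (a ++ b) = prod a ** prod b.
Proof. induction a; simpl. now rewrite gmul1. unfold prod in *. simpl. now rewrite IHa, gmulA. Qed.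
Lemma prod_cons {G:Grp} (x:G) a : prod (x :: a) = x ** prod a.
Proof. reflexivity. Qed.
Lemma prod_rev_inv {G:Grp} (K : G -> Prop) (a : list G) :
  (forall s, K s -> s ** s = gone) -> Forall K a -> ginv (prod a) = prod (rev a).
Proof.
  intros HK Ha. induction Ha; simpl. apply inv_one.
  rewrite prod_app, inv_mul, IHHa, (invol_inv x (HK x H)). simpl. now rewrite mul1_r.
Qed.
Lemma gen_word {G:Grp} (K : G -> Prop) x :
  (forall s, K s -> s ** s = gone) -> gen K x -> exists a, Forall K a /\ prod a = x.
Proof.
  intros HK Hg. induction Hg.
  - exists []. auto.
  - exists [x]. split; auto. simpl. apply mul1_r.
  - destruct IHHg1 as [a [Ha Ea]], IHHg2 as [b [Hb Eb]]. exists (a ++ b).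
    split. now apply Forall_app. now rewrite prod_app, Ea, Eb.
  - destruct IHHg as [a [Ha Ea]]. exists (rev a). split. now apply Forall_rev.
    rewrite <- Ea. symmetry. now apply (prod_rev_inv K).
Qed.
Lemma word_gen {G:Grp} (K : G -> Prop) a : Forall K a -> gen K (prod a).
Proof. intro H. induction H; simpl. constructor. apply gen_mul; auto. now constructor. Qed.
Arguments gmulA {g}. Arguments gmul1 {g}. Arguments gmulV {g}.
Local Infix "**" := gmul (at level 40, left associativity).

Lemma min_exists (P : nat -> Prop) : (exists n, P n) -> exists n, P n /\ forall m, P m -> n <= m.
Proof.
  intros [n Hn]. revert Hn. induction n as [n IH] using (well_founded_induction lt_wf). intro Hn.
  destruct (classic (exists m, m < n /\ P m)) as [[m [Hm Pm]]|Hno].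
  - exact (IH m Hm Pm).
  - exists n. split; auto. intros m Pm. destruct (Nat.lt_ge_cases m n); auto.
    exfalso. apply Hno. eauto.
Qed.

Definition weq {A:Type} (a b : A) : bool := if excluded_middle_informative (a = b) then true else false.
Lemma weq_true {A:Type} (a b : A) : weq a b = true <-> a = b.
Proof. unfold weq. destruct excluded_middle_informative; split; congruence. Qed.
Lemma weq_false {A:Type} (a b : A) : weq a b = false <-> a <> b.
Proof. unfold weq. destruct excluded_middle_informative; split; congruence. Qed.
Lemma weq_refl {A:Type} (a : A) : weq a a = true.
Proof. now apply weq_true. Qed.
Lemma weq_conj {G:Grp} (c a b : G) : weq (c ** a ** ginv c) (c ** b ** ginv c) = weq a b.
Proof.
  destruct (weq a b) eqn:E.
  - apply (proj1 (weq_true _ _)) in E. subst. apply weq_refl.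
  - apply (proj1 (weq_false _ _)) in E. apply weq_false. intro H. apply E.
    apply cancel_r in H. now apply cancel_l in H.
Qed.

Definition BoolGrp : Grp.
Proof.
  refine {| carrier := bool; gmul := xorb; ginv := fun b => b; gone := false |}.
  - intros [] [] []; reflexivity.
  - intros []; reflexivity.
  - intros []; reflexivity.
Defined.

Definition isbij {X:Type} (pr : (X -> X) * (X -> X)) : Prop :=
  (forall z, fst pr (snd pr z) = z) /\ (forall z, snd pr (fst pr z) = z).
Definition PC (X:Type) := {pr : (X -> X) * (X -> X) | isbij pr}.
Lemma pc_eq {X:Type} (p q : PC X) : (forall z, fst (proj1_sig p) z = fst (proj1_sig q) z) -> p = q.
Proof.
  destruct p as [[f g] [H1 H2]], q as [[f' g'] [H3 H4]]; simpl. intro E.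
  assert (f = f') by (apply functional_extensionality; auto). subst f'.
  assert (g = g'). { apply functional_extensionality. intro z.
    simpl in *. rewrite <- (H4 (g z)). rewrite H1. reflexivity. }
  subst g'. f_equal. apply proof_irrelevance.
Qed.
Lemma pc_mul_ok {X:Type} (p q : PC X) :
  isbij (fun z => fst (proj1_sig p) (fst (proj1_sig q) z), fun z => snd (proj1_sig q) (snd (proj1_sig p) z)).
Proof.
  destruct p as [[f g] [H1 H2]], q as [[f' g'] [H3 H4]]; split; simpl; intro z.
  now rewrite H3, H1. now rewrite H2, H4.
Qed.
Lemma pc_inv_ok {X:Type} (p : PC X) : isbij (snd (proj1_sig p), fst (proj1_sig p)).
Proof. destruct p as [[f g] [H1 H2]]; split; simpl; auto. Qed.
Lemma pc_one_ok (X:Type) : isbij (fun z : X => z, fun z : X => z).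
Proof. split; reflexivity. Qed.
Definition pc_mul {X:Type} (p q : PC X) : PC X := exist _ _ (pc_mul_ok p q).
Definition pc_inv {X:Type} (p : PC X) : PC X := exist _ _ (pc_inv_ok p).
Definition pc_one (X:Type) : PC X := exist _ _ (pc_one_ok X).
Definition PGrp (X:Type) : Grp.
Proof.
  refine {| carrier := PC X; gmul := pc_mul; ginv := pc_inv; gone := pc_one X |}.
  - intros. apply pc_eq. reflexivity.
  - intros. apply pc_eq. reflexivity.
  - intros p. apply pc_eq. intro z. simpl. destruct p as [[f g] [H1 H2]]. simpl. auto.
Defined.
Arguments gmulA {g}. Arguments gmul1 {g}. Arguments gmulV {g}.
Local Infix "**" := gmul (at level 40, left associativity).

Section Cox.
Variable W : Grp.
Variable T0 : W -> Prop.
Hypothesis HC : coxeter_gens W (fun _ => True) T0.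

Lemma cox_invol s : T0 s -> s ** s = gone.
Proof. intro H. apply (proj1 (proj2 HC) s H). Qed.
Lemma cox_ne1 s : T0 s -> s <> gone.
Proof. intro H. apply (proj1 (proj2 HC) s H). Qed.
Lemma cox_inv s : T0 s -> ginv s = s.
Proof. intro H. apply invol_inv, cox_invol, H. Qed.
Lemma cox_word x : exists a, Forall T0 a /\ prod a = x.
Proof. apply gen_word. apply cox_invol. apply (proj1 HC). exact I. Qed.

Definition wl (w : W) n := exists a, Forall T0 a /\ length a = n /\ prod a = w.
Definition len (w : W) : nat :=
  epsilon (inhabits 0) (fun n => wl w n /\ forall m, wl w m -> n <= m).
Lemma len_spec w : wl w (len w) /\ forall m, wl w m -> len w <= m.
Proof.
  unfold len. apply epsilon_spec. apply min_exists.
  destruct (cox_word w) as [a [Ha Ea]]. exists (length a), a. auto.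
Qed.
Lemma len_wl w : wl w (len w).
Proof. apply len_spec. Qed.
Lemma len_le w a : Forall T0 a -> prod a = w -> len w <= length a.
Proof. intros. apply len_spec. exists a. auto. Qed.

Lemma eps_ex : exists eps : W -> bool,
  (forall x y, eps (x ** y) = xorb (eps x) (eps y)) /\ (forall s, T0 s -> eps s = true).
Proof.
  destruct (proj2 (proj2 HC) BoolGrp (fun _ => true)) as [phi [H1 H2]].
  - intros s t n _ _ _. simpl. induction n; simpl; auto.
  - exists phi. split. intros; apply H1; exact I. exact H2.
Qed.

Lemma parity w : exists b, forall n, wl w n -> Nat.odd n = b.
Proof.
  destruct eps_ex as [eps [E1 E2]]. exists (eps w). intros n [a [Ha [<- <-]]].
  assert (E0 : eps gone = false).
  { assert (H := E1 gone gone). rewrite gmul1 in H. destruct (eps gone); simpl in *; congruence. }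
  induction Ha; simpl. now rewrite E0. unfold prod in *. simpl. rewrite E1, <- IHHa, E2 by auto.
  rewrite Nat.odd_succ, <- Nat.negb_odd. destruct (Nat.odd (length l)); reflexivity.
Qed.

Lemma len_sw s w : T0 s -> len (s ** w) = S (len w) \/ S (len (s ** w)) = len w.
Proof.
  intro Hs.
  destruct (len_wl w) as [a [Ha [La Ea]]].
  destruct (len_wl (s ** w)) as [b [Hb [Lb Eb]]].
  assert (H1 : len (s ** w) <= S (len w)).
  { rewrite <- La. apply (len_le _ (s :: a)). auto. simpl. now rewrite <- Ea. }
  assert (H2 : len w <= S (len (s ** w))).
  { rewrite <- Lb. apply (len_le _ (s :: b)). auto. simpl. fold (prod b).
    rewrite Eb, gmulA, cox_invol, gmul1; auto. }
  destruct (parity (s ** w)) as [p Hp].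
  assert (P1 : Nat.odd (S (len w)) = p).
  { apply Hp. exists (s :: a). repeat split; auto. simpl. now rewrite <- La. simpl. now rewrite <- Ea. }
  assert (P2 : Nat.odd (len (s ** w)) = p) by (apply Hp; apply len_wl).
  assert (len (s ** w) <> len w).
  { intro E. rewrite E, <- P1, Nat.odd_succ, <- Nat.negb_odd in P2.
    destruct (Nat.odd (len w)); discriminate. }
  lia.
Qed.

Lemma len_ws s w : T0 s -> len (w ** s) <= S (len w).
Proof.
  intro Hs. destruct (len_wl w) as [a [Ha [La Ea]]].
  rewrite <- La. replace (S (length a)) with (length (a ++ [s])) by (rewrite length_app; simpl; lia).
  apply len_le. apply Forall_app; auto. rewrite prod_app, Ea. simpl. now rewrite mul1_r.
Qed.

Lemma len0 w : len w = 0 -> w = gone.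
Proof. intro H. destruct (len_wl w) as [a [_ [La Ea]]]. rewrite H in La.
  destruct a; [|discriminate]. now rewrite <- Ea. Qed.

Definition X := (carrier W * bool)%type.
Definition U1 (s:W) : X -> X := fun z => (s ** fst z ** ginv s, xorb (snd z) (weq (fst z) s)).
Definition U2 (s:W) : X -> X := fun z => (ginv s ** fst z ** s, xorb (snd z) (weq (ginv s ** fst z ** s) s)).
Lemma conj_c1 (s r : W) : s ** (ginv s ** r ** s) ** ginv s = r.
Proof. rewrite !gmulA, mulV_r, gmul1, <- gmulA, mulV_r, mul1_r. reflexivity. Qed.
Lemma conj_c2 (s r : W) : ginv s ** (s ** r ** ginv s) ** s = r.
Proof. rewrite !gmulA, gmulV, gmul1, <- gmulA, gmulV, mul1_r. reflexivity. Qed.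
Lemma xx b c : xorb (xorb b c) c = b.
Proof. destruct b, c; reflexivity. Qed.
Lemma U_ok s : isbij (U1 s, U2 s).
Proof.
  split; intros [r e]; unfold U1, U2; simpl.
  - rewrite conj_c1, xx. reflexivity.
  - rewrite conj_c2, xx. reflexivity.
Qed.
Definition Uc (s:W) : PGrp X := exist _ (U1 s, U2 s) (U_ok s).

Definition cnt (x s : W) k (rho : W) :=
  fold_right xorb false (map (fun i => weq rho (gpow x i ** s)) (seq 0 (k + k))).

Lemma Upow s t k r e : T0 s -> T0 t ->
  fst (proj1_sig (gpow (Uc s ** Uc t) k)) (r, e) =
  (gpow (s ** t) k ** r ** ginv (gpow (s ** t) k),
   xorb e (cnt (s ** t) s k (gpow (s ** t) k ** r ** ginv (gpow (s ** t) k)))).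
Proof.
  intros Hs Ht. set (x := s ** t).
  induction k.
  - simpl. unfold cnt. simpl. rewrite gmul1, inv_one, mul1_r, xorb_false_r. reflexivity.
  - change (fst (proj1_sig (gpow (Uc s ** Uc t) (S k))) (r, e)) with
      (U1 s (U1 t (fst (proj1_sig (gpow (Uc s ** Uc t) k)) (r, e)))).
    rewrite IHk. unfold U1; simpl.
    set (rho' := gpow x k ** r ** ginv (gpow x k)).
    set (rho := x ** gpow x k ** r ** ginv (x ** gpow x k)).
    assert (Hx : ginv x = t ** s) by (unfold x; rewrite inv_mul, !cox_inv; auto).
    assert (Hr : rho = x ** rho' ** ginv x).
    { unfold rho, rho'. rewrite inv_mul, !gmulA. reflexivity. }
    assert (Hr2 : s ** (t ** rho' ** ginv t) ** ginv s = rho).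
    { rewrite Hr, Hx, !cox_inv by auto. unfold x. rewrite !gmulA. reflexivity. }
    rewrite Hr2. f_equal.
    assert (A1 : weq (t ** rho' ** ginv t) s = weq rho s).
    { rewrite <- Hr2. rewrite <- (weq_conj s (t ** rho' ** ginv t) s).
      f_equal. rewrite cox_inv, cox_invol, gmul1 by auto. reflexivity. }
    assert (A2 : weq rho' t = weq rho (x ** s)).
    { rewrite Hr, <- (weq_conj x rho' t). f_equal. rewrite Hx. unfold x.
      rewrite !gmulA. rewrite <- (gmulA s t t), cox_invol, mul1_r by auto.
      reflexivity. }
    assert (A3 : forall i, weq rho' (gpow x i ** s) = weq rho (gpow x (S (S i)) ** s)).
    { intro i. rewrite Hr, <- (weq_conj x rho' (gpow x i ** s)). f_equal.
      rewrite Hx. change (gpow x (S (S i))) with (x ** gpow x (S i)).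
      rewrite gpow_succ_r. unfold x. rewrite !gmulA. reflexivity. }
    unfold cnt. replace (S k + S k) with (S (S (k + k))) by lia. simpl.
    rewrite <- !seq_shift, !map_map.
    rewrite A1, A2, gmul1, mul1_r.
    assert (E : map (fun i => weq rho' (gpow x i ** s)) (seq 0 (k + k)) =
                map (fun i => weq rho (gpow x (S (S i)) ** s)) (seq 0 (k + k))).
    { apply map_ext. exact A3. }
    rewrite E. destruct e, (weq rho s), (weq rho (x ** s)), (fold_right xorb false _); reflexivity.
Qed.

Lemma seq_plus a n m : seq (a + n) m = map (fun i => i + n) (seq a m).
Proof. revert a. induction m; intro a; simpl; auto. f_equal. rewrite <- IHm. f_equal. Qed.
Lemma fold_xorb b l : fold_right xorb b l = xorb (fold_right xorb false l) b.
Proof. induction l; simpl. auto. rewrite IHl. destruct a, b, (fold_right xorb false l); reflexivity. Qed.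

Lemma cnt_zero x s n rho : gpow x n = gone -> cnt x s n rho = false.
Proof.
  intro H. unfold cnt. rewrite seq_app, map_app, fold_right_app.
  replace (0 + n) with (0 + n) by reflexivity. rewrite (seq_plus 0 n n), map_map.
  assert (E : map (fun i => weq rho (gpow x (i + n) ** s)) (seq 0 n) =
              map (fun i => weq rho (gpow x i ** s)) (seq 0 n)).
  { apply map_ext. intro i. rewrite gpow_add, H, mul1_r. reflexivity. }
  rewrite E, fold_xorb. destruct (fold_right xorb false _); reflexivity.
Qed.

Lemma phi_ex : exists phi : W -> PGrp X,
  (forall x y, phi (x ** y) = phi x ** phi y) /\ (forall s, T0 s -> phi s = Uc s).
Proof.
  destruct (proj2 (proj2 HC) (PGrp X) Uc) as [phi [H1 H2]].
  - intros s t n Hs Ht Hn. apply pc_eq. intros [r e].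
    rewrite Upow by auto. rewrite Hn, inv_one, gmul1, mul1_r, cnt_zero by auto.
    rewrite xorb_false_r. reflexivity.
  - exists phi. split; auto.
Qed.
Definition phi : W -> PGrp X := proj1_sig (constructive_indefinite_description _ phi_ex).
Lemma phi_mul x y : phi (x ** y) = phi x ** phi y.
Proof. apply (proj2_sig (constructive_indefinite_description _ phi_ex)). Qed.
Lemma phi_s s : T0 s -> phi s = Uc s.
Proof. apply (proj2_sig (constructive_indefinite_description _ phi_ex)). Qed.
Definition act (w : W) : X -> X := fst (proj1_sig (phi w)).
Lemma act_mul x y z : act (x ** y) z = act x (act y z).
Proof. unfold act. rewrite phi_mul. reflexivity. Qed.
Lemma act_one z : act gone z = z.
Proof.
  unfold act. assert (E : phi gone = gone).
  { apply idem_one. rewrite <- phi_mul, gmul1. reflexivity. }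
  rewrite E. reflexivity.
Qed.
Lemma act_s s r e : T0 s -> act s (r, e) = (s ** r ** ginv s, xorb e (weq r s)).
Proof. intro Hs. unfold act. rewrite phi_s by auto. reflexivity. Qed.

Lemma act_form w : exists c : W -> bool, forall r e, act w (r, e) = (w ** r ** ginv w, xorb e (c r)).
Proof.
  destruct (cox_word w) as [a [Ha <-]]. induction Ha.
  - exists (fun _ => false). intros. simpl. rewrite act_one, gmul1, inv_one, mul1_r, xorb_false_r. reflexivity.
  - destruct IHHa as [c Hc]. exists (fun r => xorb (c r) (weq (prod l ** r ** ginv (prod l)) x)).
    intros r e. rewrite prod_cons, act_mul, Hc, act_s by auto. rewrite inv_mul, !gmulA.
    rewrite xorb_assoc. reflexivity.
Qed.

Definition N (w t : W) : bool := snd (act w (ginv w ** t ** w, false)).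
Lemma act_eq w r e : act w (r, e) = (w ** r ** ginv w, xorb e (N w (w ** r ** ginv w))).
Proof.
  destruct (act_form w) as [c Hc]. unfold N. rewrite !Hc. simpl.
  replace (ginv w ** (w ** r ** ginv w) ** w) with r. reflexivity.
  rewrite !gmulA, gmulV, gmul1, <- gmulA, gmulV, mul1_r. reflexivity.
Qed.
Lemma N_one t : N gone t = false.
Proof. unfold N. rewrite act_one. reflexivity. Qed.
Lemma N_left s v t : T0 s -> N (s ** v) t = xorb (N v (s ** t ** s)) (weq t s).
Proof.
  intro Hs. unfold N at 1. rewrite act_mul, act_eq, act_s by auto. simpl.
  replace (v ** (ginv (s ** v) ** t ** (s ** v)) ** ginv v) with (s ** t ** s).
  2:{ rewrite inv_mul, (cox_inv s Hs). rewrite !gmulA, (mulV_r v), gmul1, <- (gmulA _ v (ginv v)), (mulV_r v), mul1_r. reflexivity. }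
  f_equal. rewrite <- (weq_conj s t s). f_equal.
  - rewrite cox_inv by auto. reflexivity.
  - rewrite cox_inv, cox_invol, gmul1 by auto. reflexivity.
Qed.

Lemma del a t : Forall T0 a -> N (prod a) t = true ->
  exists p x q, a = p ++ x :: q /\ t ** prod a = prod (p ++ q).
Proof.
  intro Ha. revert t. induction Ha as [|x l Hx Hl IH]; intros t H.
  - simpl in H. rewrite N_one in H. discriminate.
  - rewrite prod_cons, N_left in H by auto. destruct (weq t x) eqn:E.
    + apply (proj1 (weq_true _ _)) in E. subst t. exists [], x, l. split; auto.
      simpl. rewrite gmulA, cox_invol, gmul1 by auto. reflexivity.
    + rewrite xorb_false_r in H. destruct (IH _ H) as [p [y [q [E1 E2]]]].
      exists (x :: p), y, q. split. simpl. now rewrite E1.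
      simpl. fold (prod (p ++ q)). rewrite <- E2. rewrite !gmulA, cox_invol, gmul1 by auto. reflexivity.
Qed.

Lemma keyK s w : T0 s -> len (s ** w) < len w -> N w s = true.
Proof.
  intros Hs Hl. set (v := s ** w) in *.
  assert (Ew : w = s ** v) by (unfold v; rewrite gmulA, cox_invol, gmul1 by auto; reflexivity).
  clearbody v. rewrite Ew at 1. rewrite N_left by auto. rewrite weq_refl, (cox_invol s Hs), gmul1.
  destruct (N v s) eqn:E; [|reflexivity]. exfalso.
  destruct (len_wl v) as [b [Hb [Lb Eb]]]. rewrite <- Eb in E.
  destruct (del b s Hb E) as [p [x [q [E1 E2]]]].
  assert (L : len (s ** v) <= length (p ++ q)).
  { apply len_le. rewrite E1 in Hb. apply Forall_app in Hb. destruct Hb as [H1 H2].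
    inversion H2. apply Forall_app; auto. now rewrite <- Eb. }
  rewrite <- Ew in L. rewrite E1, !length_app in Lb. simpl in Lb. rewrite length_app in L. lia.
Qed.

Lemma exch s a : T0 s -> Forall T0 a -> len (s ** prod a) < len (prod a) ->
  exists p x q, a = p ++ x :: q /\ s ** prod a = prod (p ++ q).
Proof. intros Hs Ha Hl. apply del; auto. apply keyK; auto. Qed.

Lemma refl_N u s : T0 s -> N (u ** s ** ginv u) (u ** s ** ginv u) = true.
Proof.
  intro Hs. set (t := u ** s ** ginv u). unfold N.
  rewrite gmulV, gmul1.
  assert (Et : act t (t, false) = act u (act s (act (ginv u) (t, false)))).
  { unfold t at 1. rewrite !act_mul. reflexivity. }
  rewrite Et. clear Et.
  assert (Es : ginv u ** t ** ginv (ginv u) = s).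
  { unfold t. rewrite inv_inv. apply conj_c2. }
  assert (Hback : act u (act (ginv u) (t, false)) = (t, false)).
  { rewrite <- act_mul, mulV_r, act_one. reflexivity. }
  rewrite act_eq in Hback |- *. rewrite Es in Hback |- *.
  set (c := N (ginv u) s) in *.
  rewrite act_s by auto. rewrite weq_refl. rewrite act_eq in Hback |- *.
  replace (s ** s ** ginv s) with s by (rewrite cox_invol, gmul1, cox_inv; auto).
  fold t in Hback |- *. simpl in Hback |- *. injection Hback. intro H.
  destruct c, (N u t); simpl in *; congruence.
Qed.

Lemma conj_mul (c a b : W) : (c ** a ** ginv c) ** (c ** b ** ginv c) = c ** (a ** b) ** ginv c.
Proof.
  rewrite !gmulA, <- (gmulA (c ** a) (ginv c) c), gmulV, mul1_r. reflexivity.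
Qed.

Lemma refl_parabolic (K : W -> Prop) u s t : (forall k, K k -> T0 k) -> T0 s ->
  t = u ** s ** ginv u -> gen K t -> conj_closure (gen K) K t.
Proof.
  intros HK Hs Et Hg.
  destruct (gen_word K t (fun k Hk => cox_invol k (HK k Hk)) Hg) as [a [Ha Ea]].
  assert (HN : N (prod a) t = true) by (rewrite Ea, Et; apply refl_N; auto).
  destruct (del a t (Forall_impl _ HK Ha) HN) as [p [x [q [E1 E2]]]].
  assert (Htt : t ** t = gone).
  { rewrite Et, conj_mul, (cox_invol s Hs), mul1_r, mulV_r. reflexivity. }
  rewrite Ea, Htt, prod_app in E2.
  assert (Eq : prod q = ginv (prod p)) by (apply inv_unique; auto).
  rewrite E1 in Ha. apply Forall_app in Ha. destruct Ha as [Hp Hxq]. inversion Hxq; subst.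
  exists (prod p), x. repeat split; auto. apply word_gen; auto.
  rewrite <- Ea, prod_app, prod_cons, Eq, gmulA. reflexivity.
Qed.

Lemma parab_word (K : W -> Prop) a : (forall k, K k -> T0 k) -> Forall K a ->
  exists b, Forall K b /\ prod b = prod a /\ length b = len (prod a).
Proof.
  intros HK Ha. induction Ha as [|x a' Hx Ha' IH].
  - exists []. repeat split; auto. simpl. assert (H := len_le gone [] (Forall_nil _) eq_refl). simpl in H. lia.
  - destruct IH as [b' [Hb' [Eb' Lb']]]. rewrite prod_cons.
    destruct (len_sw x (prod a') (HK x Hx)) as [L|L].
    + exists (x :: b'). repeat split; auto. simpl. fold (prod b'). now rewrite Eb'. simpl. lia.
    + assert (Hb'T : Forall T0 b') by (eapply Forall_impl; eauto).
      assert (L' : len (x ** prod b') < len (prod b')) by (rewrite Eb'; lia).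
      destruct (exch x b' (HK x Hx) Hb'T L') as [p [y [q [E1 E2]]]].
      exists (p ++ q). rewrite E1 in Hb'. apply Forall_app in Hb'. destruct Hb' as [H1 H2]. inversion H2; subst.
      repeat split. apply Forall_app; auto. rewrite <- E2, Eb'. reflexivity.
      rewrite length_app in *. simpl in *. lia.
Qed.

Lemma coset_min (K : W -> Prop) d : (forall k, K k -> T0 k) ->
  (forall u, gen K u -> len d <= len (u ** d)) ->
  forall b, Forall K b -> length b = len (prod b) -> len (prod b ** d) = length b + len d.
Proof.
  intros HK Hmin b Hb. induction Hb as [|x b' Hx Hb' IH]; intro Lb.
  - simpl. rewrite gmul1. reflexivity.
  - assert (Lb' : length b' = len (prod b')).
    { pose proof (len_le (prod b') b' (Forall_impl _ HK Hb') eq_refl).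
      destruct (len_sw x (prod b') (HK x Hx)); simpl in Lb; rewrite ?prod_cons in Lb; lia. }
    specialize (IH Lb'). rewrite prod_cons, <- gmulA.
    destruct (len_sw x (prod b' ** d) (HK x Hx)) as [L|L]. simpl; lia.
    exfalso.
    destruct (len_wl d) as [c [Hc [Lc Ec]]].
    assert (Hw : Forall T0 (b' ++ c)) by (apply Forall_app; split; auto; eapply Forall_impl; eauto).
    assert (L' : len (x ** prod (b' ++ c)) < len (prod (b' ++ c))) by (rewrite prod_app, Ec; lia).
    destruct (exch x (b' ++ c) (HK x Hx) Hw L') as [p [y [q [E1 E2]]]].
    rewrite prod_app, Ec in E2.
    assert (caseA : forall l, p = b' ++ l -> c = l ++ y :: q -> False).
    { intros l Ep Ecl. subst p c.
      rewrite !prod_app in E2. rewrite prod_app, prod_cons in Ec.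
      set (u := ginv (prod b') ** x ** prod b').
      assert (Hu : gen K u).
      { unfold u. apply gen_mul. apply gen_mul. apply gen_inv, word_gen; auto. constructor; auto. apply word_gen; auto. }
      assert (Eu : u ** d = prod (l ++ q)).
      { unfold u. rewrite prod_app. apply (cancel_l (prod b')).
        rewrite !gmulA, (mulV_r (prod b')), gmul1, <- gmulA. exact E2. }
      pose proof (Hmin u Hu) as H1. rewrite Eu in H1.
      apply Forall_app in Hc. destruct Hc as [Hl Hyq]. inversion Hyq as [|? ? Hy H4]; subst.
      pose proof (len_le _ (l ++ q) (proj2 (Forall_app _ _ _) (conj Hl H4)) eq_refl) as H2.
      rewrite length_app in Lc, H2. simpl in Lc. lia. }
    symmetry in E1. apply app_eq_app in E1.
    destruct E1 as [l [[Ep Ecl] | [Eb Eyq]]].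
    + exact (caseA l Ep Ecl).
    + destruct l as [|z l].
      * simpl in Eyq. rewrite app_nil_r in Eb. apply (caseA []); simpl; auto. now rewrite app_nil_r.
      * simpl in Eyq. injection Eyq. intros Eq Ey. subst y q b'.
        assert (E3 : x ** prod (p ++ z :: l) = prod (p ++ l)).
        { apply (cancel_r d). transitivity (prod (p ++ l ++ c)).
          rewrite <- gmulA. exact E2. rewrite !prod_app, Ec, gmulA. reflexivity. }
        assert (H1 : Forall T0 (p ++ l)).
        { apply Forall_app in Hb'. destruct Hb' as [Hp Hzl]. inversion Hzl; subst.
          apply Forall_app; split; eapply Forall_impl; eauto. }
        pose proof (len_le _ (p ++ l) H1 eq_refl) as H2.
        assert (Lx : len (x ** prod (p ++ z :: l)) = S (length (p ++ z :: l))).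
        { rewrite <- prod_cons, <- Lb. reflexivity. }
        rewrite <- E3, Lx in H2.
        rewrite !length_app in *. simpl in *. lia.
Qed.

Lemma coset_min_gen (K : W -> Prop) d u : (forall k, K k -> T0 k) ->
  (forall u, gen K u -> len d <= len (u ** d)) -> gen K u -> len (u ** d) = len u + len d.
Proof.
  intros HK Hmin Hu.
  destruct (gen_word K u (fun k Hk => cox_invol k (HK k Hk)) Hu) as [a [Ha Ea]].
  destruct (parab_word K a HK Ha) as [b [Hb [Eb Lb]]].
  assert (Lb2 : length b = len (prod b)) by (rewrite Eb; exact Lb). rewrite <- Ea, <- Eb, <- Lb2. apply (coset_min K); auto.
Qed.
End Cox.
Arguments gmulA {g}. Arguments gmul1 {g}. Arguments gmulV {g}.
Local Infix "**" := gmul (at level 40, left associativity).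

Lemma conj_comp {W:Grp} (a b z : W) : (a ** b) ** z ** ginv (a ** b) = a ** (b ** z ** ginv b) ** ginv a.
Proof. rewrite inv_mul, !gmulA. reflexivity. Qed.
Lemma conj_inv {W:Grp} (c z : W) : ginv (c ** z ** ginv c) = c ** ginv z ** ginv c.
Proof. rewrite !inv_mul, inv_inv, !gmulA. reflexivity. Qed.
Lemma gen_conj {W:Grp} (P Q : W -> Prop) c z : gen P z ->
  (forall p, P p -> gen Q (c ** p ** ginv c)) -> gen Q (c ** z ** ginv c).
Proof.
  intros Hz H. induction Hz.
  - rewrite mul1_r, mulV_r. constructor.
  - auto.
  - rewrite <- conj_mul. apply gen_mul; auto.
  - rewrite <- conj_inv. apply gen_inv; auto.
Qed.
Lemma gen_conj_self {W:Grp} (Q : W -> Prop) c z : gen Q c -> gen Q z -> gen Q (c ** z ** ginv c).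
Proof. intros. apply gen_mul. apply gen_mul; auto. apply gen_inv; auto. Qed.

Theorem lemma9p1 (W : Grp) (S S' B B' : W -> Prop) :
  coxeter_gens W (fun _ => True) S ->
  finite_set S ->
  coxeter_gens W (fun _ => True) S' ->
  (forall x, S' x -> conj_closure (fun _ => True) S x) ->
  sharp_angled (fun _ => True) S S' ->
  (forall x, B x -> S x) ->
  (forall x, B' x -> S' x) ->
  (forall x, gen B x <-> gen B' x) ->
  (forall x, B' x -> conj_closure (gen B) B x) /\ sharp_angled (gen B) B B'.
Proof.
  intros HC _ HC' Hconj Hsharp HB HB' Hgen. split.
  - intros x Hx. destruct (Hconj x (HB' x Hx)) as [h [y [_ [Hy Ex]]]].
    apply (refl_parabolic W S HC B h y x HB Hy Ex). apply Hgen. now constructor.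
  - intros s t m Hs Ht Hord Hm.
    destruct (Hsharp s t m (HB s Hs) (HB t Ht) Hord Hm) as [w [_ [Hs' Ht']]].
    set (s' := w ** s ** ginv w) in *. set (t' := w ** t ** ginv w) in *.
    set (x := ginv w).
    set (J := fun z => z = s' \/ z = t').
    set (Dset := fun d => exists u y, gen B' u /\ gen J y /\ d = u ** x ** y).
    destruct (min_exists (fun n => exists d, Dset d /\ len W S' d = n)) as [n0 [[d0 [Hd0 Ln0]] Hmin]].
    { exists (len W S' x), x. split; auto. exists gone, gone. repeat split; try constructor.
      rewrite gmul1, mul1_r. reflexivity. }
    destruct Hd0 as [u0 [y0 [Hu0 [Hy0 Ed0]]]].
    assert (Hmin' : forall d, Dset d -> len W S' d0 <= len W S' d).
    { intros d Hd. rewrite Ln0. apply Hmin. eauto. }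
    assert (Hxconj : forall z, gen J z -> gen B' (x ** z ** ginv x)).
    { intros z Hz. apply gen_conj with (P := J); auto. intros p [-> | ->]; apply Hgen.
      - unfold x, s'. rewrite inv_inv, conj_c2. now constructor.
      - unfold x, t'. rewrite inv_inv, conj_c2. now constructor. }
    assert (Hdconj : forall z, gen J z -> gen B' (d0 ** z ** ginv d0)).
    { intros z Hz. rewrite Ed0, conj_comp, conj_comp.
      apply gen_conj_self; auto. apply Hxconj. apply gen_conj_self; auto. }
    assert (Hcos : forall u, gen B' u -> len W S' d0 <= len W S' (u ** d0)).
    { intros u Hu. apply Hmin'. exists (u ** u0), y0. repeat split; auto.
      apply gen_mul; auto. rewrite Ed0, !gmulA. reflexivity. }
    assert (Key : forall r, S' r -> J r -> B' (d0 ** r ** ginv d0)).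
    { intros r Hr HJ. set (r1 := d0 ** r ** ginv d0).
      assert (Hr1 : gen B' r1) by (apply Hdconj; now constructor).
      assert (L1 := coset_min_gen W S' HC' B' d0 r1 HB' Hcos Hr1).
      assert (E1 : r1 ** d0 = d0 ** r).
      { unfold r1. rewrite <- gmulA, gmulV, mul1_r. reflexivity. }
      assert (L2 := len_ws W S' HC' r d0 Hr). rewrite <- E1, L1 in L2.
      assert (Hne : r1 <> gone).
      { intro E. apply (cox_ne1 W S' HC' r Hr). apply (cancel_l d0).
        rewrite <- E1, E, gmul1, mul1_r. reflexivity. }
      assert (L3 : len W S' r1 = 1).
      { destruct (len W S' r1) eqn:E0. exfalso; apply Hne; now apply (len0 W S' HC'). lia. }
      destruct (gen_word B' r1 (fun k Hk => cox_invol W S' HC' k (HB' k Hk)) Hr1) as [a [Ha Ea]].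
      destruct (parab_word W S' HC' B' a HB' Ha) as [b [Hb [Eb Lb]]].
      rewrite Ea, L3 in Lb. destruct b as [|z [|]]; try discriminate.
      inversion Hb; subst. rewrite Ea in Eb. rewrite <- Eb. simpl. rewrite mul1_r. assumption. }
    exists ((d0 ** y0 ** ginv d0) ** u0). split.
    + apply Hgen. apply gen_mul; auto.
    + assert (Egx : (d0 ** y0 ** ginv d0) ** u0 ** x = d0).
      { assert (Eux : u0 ** x = d0 ** ginv y0).
        { rewrite Ed0, <- gmulA, mulV_r, mul1_r. reflexivity. }
        rewrite <- gmulA, Eux, !gmulA, <- (gmulA (d0 ** y0)), gmulV, mul1_r, <- gmulA, mulV_r, mul1_r.
        reflexivity. }
      assert (Es : forall v, w ** v ** ginv w = v -> True) by auto.
      assert (Es0 : s = x ** s' ** ginv x) by (unfold x, s'; rewrite inv_inv, conj_c2; reflexivity).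
      assert (Et0 : t = x ** t' ** ginv x) by (unfold x, t'; rewrite inv_inv, conj_c2; reflexivity).
      split.
      * rewrite Es0, <- conj_comp, Egx. apply Key; auto. now left.
      * rewrite Et0, <- conj_comp, Egx. apply Key; auto. now right.
Qed.
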